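(* Assume $c_i=c>0$, $\gamma_i=\gamma>0$, $\nu_i=\nu>0$, $\rho_i=\rho\in(-1,1)$ for all $i$. Let $f^0$ denote $f$ with $\gamma_{\rm P}$ replaced by $0$. Then $f^0$ has a unique maximiser, it is symmetric with common values $z^0_{s,n}$ (all $z^{S,i}$), $z^0_{d,n}$ (all diagonal $z^{Q,i,i}$), $z^0_{o,n}$ (all off-diagonal $z^{Q,i,j}$, $n\ge2$), these are the limits as $\gamma_{\rm P}\downarrow0$ of the corresponding values of the maximiser of $f$, and $$z^0_{s,n}=-\frac{\sqrt n}{\sigma}\frac{\rho}{Ac\nu}\frac{1}{n-\eta_n},\quad z^0_{o,n}=\frac{\rho^2}{Ac\nu^2}\frac{1}{n-\eta_n}\ (n\ge2),\quad z^0_{d,n}=\frac{1}{Ac\nu^2}\Big(1+\frac{\gamma\rho^2/A}{n-\eta_n}\Big),$$ where $A=\gamma+\frac{1}{c\nu^2}$ and $\eta_n=\rho^2\big((n-1)+\frac{\gamma}{A}\big)\in[0,n)$. Moreover, with all other parameters held fixed and $\nu^\dagger_{n,\rho}=\sqrt{\frac{n(1-\rho^2)+\rho^2}{\gamma cn(1-\rho^2)}}$: $|z^0_{s,n}|$ is increasing in $|\rho|$ and decreasing in $c$; $|z^0_{s,n}|$ is increasing in $\nu$ on $(0,\nu^\dagger_{n,\rho}]$ and decreasing on $[\nu^\dagger_{n,\rho},\infty)$; $z^0_{o,n}$ (for $n\ge2$) increases with $|\rho|$ and decreases with $c$ and with $\nu$; $z^0_{d,n}$ increases with $|\rho|$ and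 decreases with $c$ and with $\nu$.
   Context: Fix an integer $n\ge1$ and parameters $\sigma>0$, $\gamma_{\rm P}>0$, and for each $i\in\{1,\dots,n\}$: $c_i>0$, $\gamma_i>0$, $\nu_i>0$, $\rho_i\in(-1,1)$. Write $\nu=(\nu_1,\dots,\nu_n)^\top$, $\rho=(\rho_1,\dots,\rho_n)^\top$. The variables are a matrix $z^Q=(z^{Q,i,j})_{i,j}\in\mathbb{R}^{n\times n}$ ($i$ row, $j$ column) and a vector $z^S=(z^{S,1},\dots,z^{S,n})^\top\in\mathbb{R}^n$. Define $f:\mathbb{R}^{n\times n}\times\mathbb{R}^n\to\mathbb{R}$ by $$f(z^Q,z^S)=-\frac1n\sum_{i=1}^n\Big(\frac{(z^{Q,i,i})^2}{2c_i}+\frac{\gamma_i}{2}\sum_{j=1}^n\nu_j^2(z^{Q,i,j})^2+\frac{\gamma_i\sigma^2}{2}(z^{S,i})^2+\frac{\gamma_i\sigma}{\sqrt n}z^{S,i}\sum_{j=1}^n\rho_j\nu_jz^{Q,i,j}-\frac{z^{Q,i,i}}{c_i}\Big)-\frac{\gamma_{\rm P}}{2n^2}\sum_{i=1}^n\Big(\Big(\nu_i-\nu_i\sum_{j=1}^nz^{Q,j,i}-\frac{\rho_i\sigma}{\sqrt n}\sum_{j=1}^nz^{S,j}\Big)^2+\frac{(1-\rho_i^2)\sigma^2}{n}\Big(\sum_{j=1}^nz^{S,j}\Big)^2\Big).$$ $f$ has a unique global maximiser $(z^{Q,\star},z^{S,\star})$. *)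

(* Defs.v *)
From HB Require Import structures.
From mathcomp Require Import all_boot all_order all_algebra.
From mathcomp Require Import all_classical all_reals all_analysis.
Set Implicit Arguments. Unset Strict Implicit. Unset Printing Implicit Defensive.
Import Order.TTheory GRing.Theory Num.Theory.
Local Open Scope ring_scope.

Section Defs.
Variable R : realType.

(* The objective f, general (heterogeneous) parameters.
   zQ : n x n matrix (row i, column j), zS : column vector (zS i 0 = z^{S,i}). *)
Definition fobj (n : nat) (sigma gammaP : R) (c gam nu rho : 'I_n -> R)
    (zQ : 'M[R]_n) (zS : 'cV[R]_n) : R :=
  - (n%:R)^-1 * \sum_(i < n)
      ( (zQ i i) ^+ 2 / (2 * c i)
        + gam i / 2 * \sum_(j < n) (nu j) ^+ 2 * (zQ i j) ^+ 2
        + gam i * sigma ^+ 2 / 2 * (zS i 0) ^+ 2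
        + gam i * sigma / Num.sqrt (n%:R) * zS i 0
            * \sum_(j < n) rho j * nu j * zQ i j
        - zQ i i / c i )
  - gammaP / (2 * (n%:R) ^+ 2) * \sum_(i < n)
      ( (nu i - nu i * \sum_(j < n) zQ j i
           - rho i * sigma / Num.sqrt (n%:R) * \sum_(j < n) zS j 0) ^+ 2
        + (1 - (rho i) ^+ 2) * sigma ^+ 2 / n%:R * (\sum_(j < n) zS j 0) ^+ 2 ).

Definition fhom (n : nat) (sigma gammaP c gam nu rho : R)
    (z : 'M[R]_n * 'cV[R]_n) : R :=
  fobj sigma gammaP (fun _ => c) (fun _ => gam) (fun _ => nu) (fun _ => rho) z.1 z.2.

Definition is_maximiser (T : Type) (F : T -> R) (z : T) : Prop :=
  forall y, F y <= F z.

Definition Acoef (gam c nu : R) : R := gam + 1 / (c * nu ^+ 2).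

Definition eta_n (n : nat) (gam c nu rho : R) : R :=
  rho ^+ 2 * ((n%:R - 1) + gam / Acoef gam c nu).

Definition z0s (n : nat) (sigma gam c nu rho : R) : R :=
  - (Num.sqrt (n%:R) / sigma) * (rho / (Acoef gam c nu * c * nu))
    * (1 / (n%:R - eta_n n gam c nu rho)).

Definition z0o (n : nat) (gam c nu rho : R) : R :=
  rho ^+ 2 / (Acoef gam c nu * c * nu ^+ 2) * (1 / (n%:R - eta_n n gam c nu rho)).

Definition z0d (n : nat) (gam c nu rho : R) : R :=
  1 / (Acoef gam c nu * c * nu ^+ 2)
  * (1 + (gam * rho ^+ 2 / Acoef gam c nu) / (n%:R - eta_n n gam c nu rho)).

Definition nudag (n : nat) (gam c rho : R) : R :=
  Num.sqrt ((n%:R * (1 - rho ^+ 2) + rho ^+ 2) / (gam * c * n%:R * (1 - rho ^+ 2))).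

End Defs.

(* Main.v *)
Require Import Defs.
From HB Require Import structures.
From mathcomp Require Import all_boot all_order all_algebra.
From mathcomp Require Import all_classical all_reals all_analysis.
From mathcomp Require Import ring lra.
Import Order.TTheory GRing.Theory Num.Theory.
Import numFieldNormedType.Exports.
Local Open Scope classical_set_scope.
Local Open Scope ring_scope.
Set Implicit Arguments. Unset Strict Implicit.
Lemma Acoef_pos (R : realType) (g c nu : R) : 0 < g -> 0 < c -> 0 < nu -> 0 < Acoef g c nu.
Proof. move=> g0 c0 n0; rewrite /Acoef; apply: addr_gt0 => //; apply: divr_gt0 => //; apply: mulr_gt0 => //; exact: exprn_gt0. Qed.

Lemma eta_bounds (R : realType) (n : nat) (g c nu rho : R) : (1 <= n)%N -> 0 < g -> 0 < c -> 0 < nu -> -1 < rho < 1 ->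
  0 <= eta_n n g c nu rho < n%:R.
Proof.
move=> n1 g0 c0 nu0 /andP[r1 r2].
have A0 := Acoef_pos g0 c0 nu0.
have gA : 0 < g / Acoef g c nu by exact: divr_gt0.
have gA1 : g / Acoef g c nu < 1.
  rewrite ltr_pdivrMr // mul1r /Acoef ltrDl; apply: divr_gt0 => //; apply: mulr_gt0 => //; exact: exprn_gt0.
have m1 : 1 <= n%:R :> R by rewrite ler1n.
rewrite /eta_n; set q := g / Acoef g c nu in gA gA1 *.
have p0 : 0 <= rho^+2 by exact: sqr_ge0.
have p1 : rho^+2 < 1 by nra.
apply/andP; split.
  apply: mulr_ge0 => //; lra.
have X0 : 0 < n%:R - 1 + q by lra.
have : rho^+2 * (n%:R - 1 + q) < 1 * (n%:R - 1 + q) by rewrite ltr_pM2r.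
lra.
Qed.

Definition Den (R : realType) (n : nat) (g c nu rho : R) :=
  (n%:R * (1 - rho^+2) + rho^+2) + g * c * (n%:R * (1 - rho^+2)) * nu^+2.

Lemma Den_pos (R : realType) (n : nat) (g c nu rho : R) : (1 <= n)%N -> 0 < g -> 0 < c -> 0 < nu -> -1 < rho < 1 ->
  0 < Den n g c nu rho.
Proof.
move=> n1 g0 c0 nu0 /andP[r1 r2].
have m1 : 1 <= n%:R :> R by rewrite ler1n.
have t0 : 0 < g * c * nu^+2 by rewrite !mulr_gt0 // exprn_gt0.
have p1 : rho^+2 < 1 by nra.
have p0 : 0 <= rho^+2 by exact: sqr_ge0.
have b0 : 0 < n%:R * (1 - rho^+2) by apply: mulr_gt0; lra.
have : 0 < g * c * (n%:R * (1 - rho ^+ 2)) * nu ^+ 2 by rewrite mulrAC mulr_gt0.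
rewrite /Den; lra.
Qed.

Lemma z0s_cf (R : realType) (n : nat) (s g c nu rho : R) : (1 <= n)%N -> 0 < s -> 0 < g -> 0 < c -> 0 < nu -> -1 < rho < 1 ->
  z0s n s g c nu rho = - (Num.sqrt n%:R / s) * (rho * nu / Den n g c nu rho).
Proof.
move=> n1 s0 g0 c0 nu0 rr.
have D0 := Den_pos n1 g0 c0 nu0 rr.
have t0 : 0 < g * (c * nu^+2) by rewrite !mulr_gt0 // exprn_gt0.
rewrite /z0s /eta_n /Acoef; move: D0; rewrite /Den => D0.
field.
rewrite !lt0r_neq0 //; lra.
Qed.

Lemma z0o_cf (R : realType) (n : nat) (g c nu rho : R) : (1 <= n)%N -> 0 < g -> 0 < c -> 0 < nu -> -1 < rho < 1 ->
  z0o n g c nu rho = rho^+2 / Den n g c nu rho.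
Proof.
move=> n1 g0 c0 nu0 rr.
have D0 := Den_pos n1 g0 c0 nu0 rr.
have t0 : 0 < g * (c * nu^+2) by rewrite !mulr_gt0 // exprn_gt0.
rewrite /z0o /eta_n /Acoef; move: D0; rewrite /Den => D0.
field.
rewrite !lt0r_neq0 //; lra.
Qed.

Lemma z0d_cf (R : realType) (n : nat) (g c nu rho : R) : (1 <= n)%N -> 0 < g -> 0 < c -> 0 < nu -> -1 < rho < 1 ->
  z0d n g c nu rho = (n%:R * (1 - rho^+2) + rho^+2) / Den n g c nu rho.
Proof.
move=> n1 g0 c0 nu0 rr.
have D0 := Den_pos n1 g0 c0 nu0 rr.
have t0 : 0 < g * (c * nu^+2) by rewrite !mulr_gt0 // exprn_gt0.
have /andP[_ e1] := eta_bounds n1 g0 c0 nu0 rr.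
rewrite /z0d; move: e1 D0; rewrite /eta_n /Acoef /Den => e1 D0.
have E0 : n%:R - rho ^+ 2 * (n%:R - 1 + g / (g + 1 / (c * nu ^+ 2))) != 0.
  by rewrite subr_eq0 eq_sym lt_eqF.
field.
rewrite !lt0r_neq0 //; lra.
Qed.

Lemma frac_lt (R : realType) (x y x' y' : R) : 0 < y -> 0 < y' -> x * y' < x' * y -> x / y < x' / y'.
Proof. by move=> y0 y'0 h; rewrite ltr_pdivrMr // mulrAC ltr_pdivlMr. Qed.

Lemma frac_le (R : realType) (x y x' y' : R) : 0 < y -> 0 < y' -> x * y' <= x' * y -> x / y <= x' / y'.
Proof. by move=> y0 y'0 h; rewrite ler_pdivrMr // mulrAC ler_pdivlMr. Qed.

Lemma abs_z0s (R : realType) (n : nat) (s g c nu rho : R) : (1 <= n)%N -> 0 < s -> 0 < g -> 0 < c -> 0 < nu -> -1 < rho < 1 ->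
  `|z0s n s g c nu rho| = Num.sqrt n%:R / s * (`|rho| * nu / Den n g c nu rho).
Proof.
move=> n1 s0 g0 c0 nu0 rr.
have D0 := Den_pos n1 g0 c0 nu0 rr.
have K0 : 0 <= Num.sqrt n%:R / s by apply: divr_ge0; [exact: sqrtr_ge0 | exact: ltW].
rewrite z0s_cf // normrM normrN (ger0_norm K0) normrM normfV normrM (ger0_norm (ltW nu0)).
by rewrite (ger0_norm (ltW D0)).
Qed.

Lemma K_pos (R : realType) (n : nat) (s : R) : (1 <= n)%N -> 0 < s -> 0 < Num.sqrt n%:R / s.
Proof. by move=> n1 s0; rewrite divr_gt0 // sqrtr_gt0 ltr0n. Qed.

Lemma sq_abs_lt (R : realType) (r1 r2 : R) : `|r1| < `|r2| -> r1^+2 < r2^+2.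
Proof.
move=> h; rewrite -(real_normK (num_real r1)) -(real_normK (num_real r2)).
have := normr_ge0 r1; nra.
Qed.

Lemma part2 (R : realType) (n : nat) (sigma gam c nu rho1 rho2 : R) :
     (1 <= n)%N -> 0 < sigma -> 0 < gam -> 0 < c -> 0 < nu ->
     -1 < rho1 < 1 -> -1 < rho2 < 1 -> `|rho1| < `|rho2| ->
     `|z0s n sigma gam c nu rho1| < `|z0s n sigma gam c nu rho2|.
Proof.
move=> n1 s0 g0 c0 nu0 rr1 rr2 h.
rewrite !abs_z0s // ltr_pM2l; last exact: K_pos.
have D1 := Den_pos n1 g0 c0 nu0 rr1.
have D2 := Den_pos n1 g0 c0 nu0 rr2.
apply: frac_lt => //.
move: D1 D2; rewrite /Den -[rho1^+2](real_normK (num_real rho1)) -[rho2^+2](real_normK (num_real rho2)) => D1 D2.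
set u1 := `|rho1| in h D1 *; set u2 := `|rho2| in h D1 D2 *.
have u10 : 0 <= u1 by exact: normr_ge0.
have m1 : 1 <= n%:R :> R by rewrite ler1n.
have t0 : 0 < gam * c * nu^+2 by rewrite !mulr_gt0 // exprn_gt0.
rewrite -subr_gt0.
have -> : u2 * nu * (n%:R * (1 - u1 ^+ 2) + u1 ^+ 2 + gam * c * (n%:R * (1 - u1 ^+ 2)) * nu ^+ 2) -
  u1 * nu * (n%:R * (1 - u2 ^+ 2) + u2 ^+ 2 + gam * c * (n%:R * (1 - u2 ^+ 2)) * nu ^+ 2)
  = nu * (u2 - u1) * (n%:R * (1 + gam * c * nu^+2) + u1 * u2 * (n%:R - 1 + gam * c * nu^+2 * n%:R)) by ring.
apply: mulr_gt0; first by apply: mulr_gt0 => //; lra.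
have : 0 <= u1 * u2 * (n%:R - 1 + gam * c * nu ^+ 2 * n%:R).
  apply: mulr_ge0; first by apply: mulr_ge0 => //; lra.
  have : 0 < gam * c * nu ^+ 2 * n%:R by apply: mulr_gt0 => //; lra.
  lra.
have : 0 < n%:R * (1 + gam * c * nu ^+ 2) by apply: mulr_gt0; lra.
lra.
Qed.

Lemma part3 (R : realType) (n : nat) (sigma gam c1 c2 nu rho : R) :
     (1 <= n)%N -> 0 < sigma -> 0 < gam -> 0 < c1 -> c1 < c2 -> 0 < nu -> -1 < rho < 1 ->
     `|z0s n sigma gam c2 nu rho| <= `|z0s n sigma gam c1 nu rho|
     /\ (rho != 0 -> `|z0s n sigma gam c2 nu rho| < `|z0s n sigma gam c1 nu rho|).
Proof.
move=> n1 s0 g0 c10 c12 nu0 rr.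
have c20 : 0 < c2 by lra.
rewrite !abs_z0s //.
have D1 := Den_pos n1 g0 c10 nu0 rr.
have D2 := Den_pos n1 g0 c20 nu0 rr.
have K0 := K_pos n1 s0.
have /andP[r1 r2] := rr.
have m1 : 1 <= n%:R :> R by rewrite ler1n.
have b0 : 0 < n%:R * (1 - rho^+2) by apply: mulr_gt0; nra.
have E : Den n gam c2 nu rho - Den n gam c1 nu rho = gam * (c2 - c1) * (n%:R * (1 - rho^+2)) * nu^+2
  by rewrite /Den; ring.
have E0 : 0 < gam * (c2 - c1) * (n%:R * (1 - rho^+2)) * nu^+2.
  have cc : 0 < c2 - c1 by lra.
  apply: mulr_gt0; last exact: exprn_gt0.
  by apply: mulr_gt0 => //; apply: mulr_gt0.
have X0 : 0 <= `|rho| * nu by rewrite mulr_ge0 // ltW.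
split.
  rewrite ler_pM2l //; apply: frac_le => //.
  by rewrite ler_wpM2l // -subr_ge0 E ltW.
move=> rn; rewrite ltr_pM2l //; apply: frac_lt => //.
have X1 : 0 < `|rho| * nu by rewrite mulr_gt0 // normr_gt0.
by rewrite ltr_pM2l // -subr_gt0 E.
Qed.

Lemma nudag_sq (R : realType) (n : nat) (g c rho : R) : (1 <= n)%N -> 0 < g -> 0 < c -> -1 < rho < 1 ->
  nudag n g c rho ^+ 2 * (g * c * (n%:R * (1 - rho^+2))) = n%:R * (1 - rho^+2) + rho^+2.
Proof.
move=> n1 g0 c0 /andP[r1 r2].
have m1 : 1 <= n%:R :> R by rewrite ler1n.
have b0 : 0 < n%:R * (1 - rho^+2) by apply: mulr_gt0; nra.
have k0 : 0 < g * c * n%:R * (1 - rho^+2) by rewrite -mulrA mulr_gt0 // mulr_gt0.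
have a0 : 0 < n%:R * (1 - rho^+2) + rho^+2 by have := sqr_ge0 rho; lra.
rewrite /nudag sqr_sqrtr; last by apply: divr_ge0; exact: ltW.
rewrite !mulrA; field.
have h1 : 0 < 1 - rho^+2 by nra.
by rewrite !lt0r_neq0 // ltr0n.
Qed.

Lemma part45 (R : realType) (n : nat) (sigma gam c nu1 nu2 rho : R) :
     (1 <= n)%N -> 0 < sigma -> 0 < gam -> 0 < c -> -1 < rho < 1 -> 0 < nu1 -> nu1 < nu2 ->
     (nu2 <= nudag n gam c rho ->
     `|z0s n sigma gam c nu1 rho| <= `|z0s n sigma gam c nu2 rho|
     /\ (rho != 0 -> `|z0s n sigma gam c nu1 rho| < `|z0s n sigma gam c nu2 rho|))
   /\ (nudag n gam c rho <= nu1 ->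
     `|z0s n sigma gam c nu2 rho| <= `|z0s n sigma gam c nu1 rho|
     /\ (rho != 0 -> `|z0s n sigma gam c nu2 rho| < `|z0s n sigma gam c nu1 rho|)).
Proof.
move=> n1 s0 g0 c0 rr nu10 nu12.
have nu20 : 0 < nu2 by lra.
rewrite !abs_z0s //.
have D1 := Den_pos n1 g0 c0 nu10 rr.
have D2 := Den_pos n1 g0 c0 nu20 rr.
have K0 := K_pos n1 s0.
have hq := nudag_sq n1 g0 c0 rr.
have /andP[r1 r2] := rr.
have m1 : 1 <= n%:R :> R by rewrite ler1n.
have b0 : 0 < n%:R * (1 - rho^+2) by apply: mulr_gt0; nra.
have k0 : 0 < gam * c * (n%:R * (1 - rho^+2)) by rewrite mulr_gt0 // mulr_gt0.
have d0 : 0 <= nudag n gam c rho by exact: sqrtr_ge0.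
move: D1 D2 hq; rewrite /Den.
set a := n%:R * (1 - rho ^+ 2) + rho ^+ 2.
set k := gam * c * (n%:R * (1 - rho ^+ 2)) in k0 *.
set d := nudag n gam c rho in d0 *.
move=> D1 D2 hq.
have u0 : 0 <= `|rho| by exact: normr_ge0.
have E : forall x y : R, `|rho| * y * (a + k * x ^+ 2) - `|rho| * x * (a + k * y ^+ 2) = `|rho| * (y - x) * (a - k * x * y).
  by move=> x y; ring.
split => hd.
  have hk : k * nu1 * nu2 < a.
    have s1 : nu2 ^+ 2 <= d ^+ 2 by nra.
    have s2 : k * nu1 * nu2 < k * nu2 ^+ 2.
      have h1 := mulr_gt0 k0 nu20; have h2 : 0 < nu2 - nu1 by lra. nra.
    have s3 : k * nu2 ^+ 2 <= k * d ^+ 2 by rewrite ler_pM2l.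
    have s4 : k * d^+2 = a by rewrite mulrC.
    lra.
  split.
    rewrite ler_pM2l //; apply: frac_le => //.
    rewrite -subr_ge0 E; apply: mulr_ge0; [apply: mulr_ge0 => //|]; lra.
  move=> rn; rewrite ltr_pM2l //; apply: frac_lt => //.
  rewrite -subr_gt0 E; apply: mulr_gt0; [apply: mulr_gt0; rewrite ?normr_gt0 //|]; lra.
have hk : a < k * nu2 * nu1.
  have s1 : d ^+ 2 <= nu1 ^+ 2 by nra.
  have s2 : k * nu1 ^+ 2 < k * nu2 * nu1.
    have h1 := mulr_gt0 k0 nu10; have h2 : 0 < nu2 - nu1 by lra. nra.
  have s3 : k * d ^+ 2 <= k * nu1 ^+ 2 by rewrite ler_pM2l.
  have s4 : k * d^+2 = a by rewrite mulrC.
  lra.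
have E' : `|rho| * nu1 * (a + k * nu2 ^+ 2) - `|rho| * nu2 * (a + k * nu1 ^+ 2) = `|rho| * (nu2 - nu1) * (k * nu2 * nu1 - a) by ring.
split.
  rewrite ler_pM2l //; apply: frac_le => //.
  rewrite -subr_ge0 E'; apply: mulr_ge0; [apply: mulr_ge0 => //|]; lra.
move=> rn; rewrite ltr_pM2l //; apply: frac_lt => //.
rewrite -subr_gt0 E'; apply: mulr_gt0; [apply: mulr_gt0; rewrite ?normr_gt0 //|]; lra.
Qed.

Lemma Den_c (R : realType) (n : nat) (g c1 c2 nu rho : R) :
  Den n g c2 nu rho - Den n g c1 nu rho = g * (c2 - c1) * (n%:R * (1 - rho^+2)) * nu^+2.
Proof. by rewrite /Den; ring. Qed.

Lemma Den_nu (R : realType) (n : nat) (g c nu1 nu2 rho : R) :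
  Den n g c nu2 rho - Den n g c nu1 rho = g * c * (n%:R * (1 - rho^+2)) * (nu2 - nu1) * (nu2 + nu1).
Proof. by rewrite /Den; ring. Qed.

Lemma Den_c_lt (R : realType) (n : nat) (g c1 c2 nu rho : R) :
  (1 <= n)%N -> 0 < g -> c1 < c2 -> 0 < nu -> -1 < rho < 1 -> Den n g c1 nu rho < Den n g c2 nu rho.
Proof.
move=> n1 g0 c12 nu0 /andP[r1 r2].
have m1 : 1 <= n%:R :> R by rewrite ler1n.
have b0 : 0 < n%:R * (1 - rho^+2) by apply: mulr_gt0; nra.
have cc : 0 < c2 - c1 by lra.
rewrite -subr_gt0 Den_c.
apply: mulr_gt0; last exact: exprn_gt0.
by apply: mulr_gt0 => //; apply: mulr_gt0.
Qed.

Lemma Den_nu_lt (R : realType) (n : nat) (g c nu1 nu2 rho : R) :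
  (1 <= n)%N -> 0 < g -> 0 < c -> 0 < nu1 -> nu1 < nu2 -> -1 < rho < 1 -> Den n g c nu1 rho < Den n g c nu2 rho.
Proof.
move=> n1 g0 c0 nu10 nu12 /andP[r1 r2].
have m1 : 1 <= n%:R :> R by rewrite ler1n.
have b0 : 0 < n%:R * (1 - rho^+2) by apply: mulr_gt0; nra.
have cc : 0 < nu2 - nu1 by lra.
have cc' : 0 < nu2 + nu1 by lra.
rewrite -subr_gt0 Den_nu.
apply: mulr_gt0 => //; apply: mulr_gt0 => //; apply: mulr_gt0 => //; exact: mulr_gt0.
Qed.

Lemma dec_frac (R : realType) (X D1 D2 : R) : 0 <= X -> 0 < D1 -> D1 < D2 ->
  X / D2 <= X / D1 /\ (0 < X -> X / D2 < X / D1).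
Proof.
move=> X0 D10 D12; have D20 : 0 < D2 by lra.
split.
  apply: frac_le => //; rewrite ler_wpM2l //; exact: ltW.
by move=> Xp; apply: frac_lt => //; rewrite ltr_pM2l.
Qed.

Lemma part6 (R : realType) (n : nat) (gam c nu rho1 rho2 : R) :
     (2 <= n)%N -> 0 < gam -> 0 < c -> 0 < nu ->
     -1 < rho1 < 1 -> -1 < rho2 < 1 -> `|rho1| < `|rho2| ->
     z0o n gam c nu rho1 < z0o n gam c nu rho2.
Proof.
move=> n2 g0 c0 nu0 rr1 rr2 h.
have n1 : (1 <= n)%N by apply: leq_trans n2.
have D1 := Den_pos n1 g0 c0 nu0 rr1.
have D2 := Den_pos n1 g0 c0 nu0 rr2.
rewrite !z0o_cf //.
have hx := sq_abs_lt h.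
apply: frac_lt => //.
move: D1 D2; rewrite /Den.
set x1 := rho1^+2 in hx *; set x2 := rho2^+2 in hx *.
move=> D1 D2.
have m1 : 1 <= n%:R :> R by rewrite ler1n.
have t0 : 0 < gam * c * nu^+2 by rewrite !mulr_gt0 // exprn_gt0.
rewrite -subr_gt0.
have -> : x2 * (n%:R * (1 - x1) + x1 + gam * c * (n%:R * (1 - x1)) * nu ^+ 2) -
  x1 * (n%:R * (1 - x2) + x2 + gam * c * (n%:R * (1 - x2)) * nu ^+ 2)
  = (x2 - x1) * (n%:R * (1 + gam * c * nu^+2)) by ring.
apply: mulr_gt0; first lra.
apply: mulr_gt0; lra.
Qed.

Lemma part78 (R : realType) (rho : R) (D1 D2 : R) :
  0 < D1 -> D1 < D2 ->
  rho^+2 / D2 <= rho^+2 / D1 /\ (rho != 0 -> rho^+2 / D2 < rho^+2 / D1).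
Proof.
move=> D10 D12.
have [h1 h2] := dec_frac (sqr_ge0 rho) D10 D12.
by split => // rn; apply: h2; rewrite lt_def sqrf_eq0 rn sqr_ge0.
Qed.

Lemma part7 (R : realType) (n : nat) (gam c1 c2 nu rho : R) :
     (2 <= n)%N -> 0 < gam -> 0 < c1 -> c1 < c2 -> 0 < nu -> -1 < rho < 1 ->
     z0o n gam c2 nu rho <= z0o n gam c1 nu rho
     /\ (rho != 0 -> z0o n gam c2 nu rho < z0o n gam c1 nu rho).
Proof.
move=> n2 g0 c10 c12 nu0 rr.
have n1 : (1 <= n)%N by apply: leq_trans n2.
have c20 : 0 < c2 by lra.
rewrite !z0o_cf //; apply: part78; first exact: Den_pos.
exact: Den_c_lt.
Qed.

Lemma part8 (R : realType) (n : nat) (gam c nu1 nu2 rho : R) :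
     (2 <= n)%N -> 0 < gam -> 0 < c -> 0 < nu1 -> nu1 < nu2 -> -1 < rho < 1 ->
     z0o n gam c nu2 rho <= z0o n gam c nu1 rho
     /\ (rho != 0 -> z0o n gam c nu2 rho < z0o n gam c nu1 rho).
Proof.
move=> n2 g0 c0 nu10 nu12 rr.
have n1 : (1 <= n)%N by apply: leq_trans n2.
have nu20 : 0 < nu2 by lra.
rewrite !z0o_cf //; apply: part78; first exact: Den_pos.
exact: Den_nu_lt.
Qed.

Lemma a_pos (R : realType) (n : nat) (rho : R) : (1 <= n)%N -> -1 < rho < 1 ->
  0 < n%:R * (1 - rho^+2) + rho^+2.
Proof.
move=> n1 /andP[r1 r2].
have m1 : 1 <= n%:R :> R by rewrite ler1n.
have b0 : 0 < n%:R * (1 - rho^+2) by apply: mulr_gt0; nra.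
have := sqr_ge0 rho; lra.
Qed.

Lemma part9 (R : realType) (n : nat) (gam c nu rho1 rho2 : R) :
     (1 <= n)%N -> 0 < gam -> 0 < c -> 0 < nu ->
     -1 < rho1 < 1 -> -1 < rho2 < 1 -> `|rho1| < `|rho2| ->
     z0d n gam c nu rho1 < z0d n gam c nu rho2.
Proof.
move=> n1 g0 c0 nu0 rr1 rr2 h.
have D1 := Den_pos n1 g0 c0 nu0 rr1.
have D2 := Den_pos n1 g0 c0 nu0 rr2.
rewrite !z0d_cf //.
have hx := sq_abs_lt h.
apply: frac_lt => //.
move: D1 D2; rewrite /Den.
set x1 := rho1^+2 in hx *; set x2 := rho2^+2 in hx *.
move=> D1 D2.
have m1 : 1 <= n%:R :> R by rewrite ler1n.
have t0 : 0 < gam * c * nu^+2 by rewrite !mulr_gt0 // exprn_gt0.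
rewrite -subr_gt0.
have -> : (n%:R * (1 - x2) + x2) * (n%:R * (1 - x1) + x1 + gam * c * (n%:R * (1 - x1)) * nu ^+ 2) -
  (n%:R * (1 - x1) + x1) * (n%:R * (1 - x2) + x2 + gam * c * (n%:R * (1 - x2)) * nu ^+ 2)
  = (x2 - x1) * (n%:R * (gam * c * nu^+2)) by ring.
apply: mulr_gt0; first lra.
apply: mulr_gt0; lra.
Qed.

Lemma part10 (R : realType) (n : nat) (gam c1 c2 nu rho : R) :
     (1 <= n)%N -> 0 < gam -> 0 < c1 -> c1 < c2 -> 0 < nu -> -1 < rho < 1 ->
     z0d n gam c2 nu rho < z0d n gam c1 nu rho.
Proof.
move=> n1 g0 c10 c12 nu0 rr.
have c20 : 0 < c2 by lra.
rewrite !z0d_cf //.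
have [_ h] := dec_frac (ltW (a_pos n1 rr)) (Den_pos n1 g0 c10 nu0 rr) (Den_c_lt n1 g0 c12 nu0 rr).
exact: h (a_pos n1 rr).
Qed.

Lemma part11 (R : realType) (n : nat) (gam c nu1 nu2 rho : R) :
     (1 <= n)%N -> 0 < gam -> 0 < c -> 0 < nu1 -> nu1 < nu2 -> -1 < rho < 1 ->
     z0d n gam c nu2 rho < z0d n gam c nu1 rho.
Proof.
move=> n1 g0 c0 nu10 nu12 rr.
have nu20 : 0 < nu2 by lra.
rewrite !z0d_cf //.
have [_ h] := dec_frac (ltW (a_pos n1 rr)) (Den_pos n1 g0 c0 nu10 rr) (Den_nu_lt n1 g0 c0 nu10 nu12 rr).
exact: h (a_pos n1 rr).
Qed.

Lemma cvg_sq (R : realType) (f : R -> R) (l M : R) :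
  (forall x, 0 < x -> (f x - l)^+2 <= M * x) -> f x @[x --> 0^'+] --> l.
Proof.
move=> hf; apply/cvgrPdist_lt => e e0.
have M1 : 0 < `|M| + 1 by have := normr_ge0 M; lra.
have d0 : 0 < e^+2 / (`|M| + 1) by apply: divr_gt0 => //; exact: exprn_gt0.
near=> x.
have x0 : 0 < x by near: x; exact: nbhs_right_gt.
have xd : x < e^+2 / (`|M| + 1) by near: x; exact: nbhs_right_lt.
have h1 := hf x x0.
have h2 : M * x <= `|M| * x by rewrite ler_pM2r // real_ler_norm // num_real.
have h3 : (`|M| + 1) * x < e^+2 by rewrite mulrC -ltr_pdivlMr.
have h4 : `|M| * x <= (`|M| + 1) * x by rewrite ler_pM2r // lerDl.
have h5 : `|l - f x| ^+ 2 < e^+2.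
  by rewrite real_normK ?num_real // -sqrrN opprB; lra.
have := normr_ge0 (l - f x); nra.
Unshelve. all: by end_near.
Qed.

Definition Trow (R : realType) (n : nat) (s g c nu rho : R) (y : 'I_n -> R) (sv : R) (i : 'I_n) : R :=
  (y i) ^+ 2 / (2 * c) + g / 2 * \sum_(j < n) nu ^+ 2 * (y j) ^+ 2
  + g * s ^+ 2 / 2 * sv ^+ 2
  + g * s / Num.sqrt (n%:R) * sv * \sum_(j < n) rho * nu * y j
  - y i / c.

Definition Pen (R : realType) (n : nat) (sigma c gam nu rho : R) (z : 'M[R]_n * 'cV[R]_n) : R :=
  (2 * (n%:R) ^+ 2)^-1 * \sum_(i < n)
      ( (nu - nu * \sum_(j < n) z.1 j i
           - rho * sigma / Num.sqrt (n%:R) * \sum_(j < n) z.2 j 0) ^+ 2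
        + (1 - rho ^+ 2) * sigma ^+ 2 / n%:R * (\sum_(j < n) z.2 j 0) ^+ 2 ).

Lemma fhom_eq (R : realType) (n : nat) (s gP c g nu rho : R) (z : 'M[R]_n * 'cV[R]_n) :
  fhom s gP c g nu rho z = - (n%:R)^-1 * \sum_(i < n) Trow s g c nu rho (fun j => z.1 i j) (z.2 i 0) i
     - gP * Pen s c g nu rho z.
Proof. rewrite /fhom /fobj /Trow /Pen /=; ring. Qed.

Lemma Pen_ge0 (R : realType) (n : nat) (s c g nu rho : R) (z : 'M[R]_n * 'cV[R]_n) :
  -1 < rho < 1 -> 0 <= Pen s c g nu rho z.
Proof.
move=> /andP[r1 r2]; rewrite /Pen; apply: mulr_ge0.
  by rewrite invr_ge0 mulr_ge0 // exprn_ge0.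
apply: sumr_ge0 => i _; apply: addr_ge0; first exact: sqr_ge0.
apply: mulr_ge0; last exact: sqr_ge0.
apply: divr_ge0; last exact: ler0n.
apply: mulr_ge0; last exact: sqr_ge0.
nra.
Qed.

Lemma sum_sq_lin (R : realType) (n : nat) (y : 'I_n -> R) (a k : R) :
  \sum_(j < n) (a * y j + k) ^+ 2 = a^+2 * \sum_(j < n) (y j)^+2 + 2 * a * k * \sum_(j < n) y j + n%:R * k^+2.
Proof.
rewrite (eq_bigr (fun j => a^+2 * (y j)^+2 + (2 * a * k) * y j + k^+2)); last by move=> j _; ring.
rewrite !big_split /= -!mulr_sumr sumr_const card_ord -mulr_natl; ring.
Qed.

Lemma Trow_sos (R : realType) (n : nat) (s g c nu rho : R) (y : 'I_n -> R) (sv : R) (i : 'I_n) :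
  (1 <= n)%N -> 0 < c ->
  Trow s g c nu rho y sv i = (y i)^+2 / (2 * c) - y i / c
     + g / 2 * \sum_(j < n) (nu * y j + s * rho * sv / Num.sqrt n%:R) ^+ 2
     + g * s^+2 * (1 - rho^+2) / 2 * sv^+2.
Proof.
move=> n1 c0; rewrite /Trow sum_sq_lin.
rewrite -!mulr_sumr.
have hr : Num.sqrt n%:R ^+ 2 = n%:R :> R by rewrite sqr_sqrtr // ler0n.
have r0 : 0 < Num.sqrt n%:R :> R by rewrite sqrtr_gt0 ltr0n.
set r := Num.sqrt n%:R in hr r0 *.
rewrite -hr; field.
by rewrite !lt0r_neq0.
Qed.


Lemma foc1 (R : realType) (n : nat) (s g c nu rho : R) : (1 <= n)%N -> 0 < s -> 0 < g -> 0 < c -> 0 < nu -> -1 < rho < 1 ->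
  nu * z0o n g c nu rho + s * rho * z0s n s g c nu rho / Num.sqrt n%:R = 0.
Proof.
move=> n1 s0 g0 c0 nu0 rr.
have D0 := Den_pos n1 g0 c0 nu0 rr.
have r0 : 0 < Num.sqrt n%:R :> R by rewrite sqrtr_gt0 ltr0n.
rewrite z0o_cf // z0s_cf //.
set r := Num.sqrt _ in r0 *; set D := Den _ _ _ _ _ in D0 *.
field; by rewrite !lt0r_neq0.
Qed.

Lemma foc2 (R : realType) (n : nat) (s g c nu rho : R) : (1 <= n)%N -> 0 < s -> 0 < g -> 0 < c -> 0 < nu -> -1 < rho < 1 ->
  (z0d n g c nu rho - 1) / c + g * nu * (nu * z0d n g c nu rho + s * rho * z0s n s g c nu rho / Num.sqrt n%:R) = 0.
Proof.
move=> n1 s0 g0 c0 nu0 rr.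
have D0 := Den_pos n1 g0 c0 nu0 rr.
have r0 : 0 < Num.sqrt n%:R :> R by rewrite sqrtr_gt0 ltr0n.
rewrite z0d_cf // z0s_cf //.
set r := Num.sqrt _ in r0 *.
move: D0; rewrite /Den => D0.
field; by rewrite !lt0r_neq0.
Qed.

Lemma foc3 (R : realType) (n : nat) (s g c nu rho : R) : (1 <= n)%N -> 0 < s -> 0 < g -> 0 < c -> 0 < nu -> -1 < rho < 1 ->
  g * (nu * z0d n g c nu rho + s * rho * z0s n s g c nu rho / Num.sqrt n%:R) * s * rho / Num.sqrt n%:R
   + g * s^+2 * (1 - rho^+2) * z0s n s g c nu rho = 0.
Proof.
move=> n1 s0 g0 c0 nu0 rr.
have D0 := Den_pos n1 g0 c0 nu0 rr.
have r0 : 0 < Num.sqrt n%:R :> R by rewrite sqrtr_gt0 ltr0n.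
have hr : Num.sqrt n%:R ^+ 2 = n%:R :> R by rewrite sqr_sqrtr // ler0n.
rewrite z0d_cf // z0s_cf //.
set r := Num.sqrt _ in r0 hr *.
move: D0; rewrite /Den -hr => D0.
field; by rewrite !lt0r_neq0.
Qed.

Definition Qrow (R : realType) (n : nat) (s g c nu rho : R) (h : 'I_n -> R) (t : R) (i : 'I_n) : R :=
  (h i)^+2 / (2 * c) + g / 2 * \sum_(j < n) (nu * h j + s * rho * t / Num.sqrt n%:R) ^+ 2
  + g * s^+2 * (1 - rho^+2) / 2 * t^+2.

Lemma row_id (R : realType) (n : nat) (s g c nu rho : R) (zr y : 'I_n -> R) (sv S0 : R) (i : 'I_n) :
  (1 <= n)%N -> 0 < s -> 0 < g -> 0 < c -> 0 < nu -> -1 < rho < 1 ->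
  (forall j, zr j = if i == j then z0d n g c nu rho else z0o n g c nu rho) ->
  S0 = z0s n s g c nu rho ->
  Trow s g c nu rho y sv i = Trow s g c nu rho zr S0 i + Qrow s g c nu rho (fun j => y j - zr j) (sv - S0) i.
Proof.
move=> n1 s0 g0 c0 nu0 rr hz hS.
have F1 := foc1 n1 s0 g0 c0 nu0 rr.
have F2 := foc2 n1 s0 g0 c0 nu0 rr.
have F3 := foc3 n1 s0 g0 c0 nu0 rr.
have r0 : 0 < Num.sqrt n%:R :> R by rewrite sqrtr_gt0 ltr0n.
rewrite !Trow_sos // /Qrow.
have hsplit : \sum_(j < n) (nu * y j + s * rho * sv / Num.sqrt n%:R) ^+ 2 =
   \sum_(j < n) (nu * zr j + s * rho * S0 / Num.sqrt n%:R) ^+ 2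
   + 2 * ((nu * z0d n g c nu rho + s * rho * S0 / Num.sqrt n%:R) * (nu * (y i - zr i) + s * rho * (sv - S0) / Num.sqrt n%:R))
   + \sum_(j < n) (nu * (y j - zr j) + s * rho * (sv - S0) / Num.sqrt n%:R) ^+ 2.
  rewrite (eq_bigr (fun j => (nu * zr j + s * rho * S0 / Num.sqrt n%:R) ^+ 2
     + 2 * ((nu * zr j + s * rho * S0 / Num.sqrt n%:R) * (nu * (y j - zr j) + s * rho * (sv - S0) / Num.sqrt n%:R))
     + (nu * (y j - zr j) + s * rho * (sv - S0) / Num.sqrt n%:R) ^+ 2)); last first.
    move=> j _; field; exact: lt0r_neq0.
  rewrite !big_split /= -mulr_sumr; congr (_ + 2 * _ + _).
  rewrite (bigD1 i) //= big1 ?addr0.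
    by rewrite hz eqxx.
  move=> j ji; have ij : (i == j) = false by rewrite eq_sym; exact: negbTE.
  by rewrite hz ij hS F1 mul0r.
rewrite hsplit hz eqxx hS.
apply/eqP; rewrite -subr_eq0; apply/eqP.
transitivity ((y i - z0d n g c nu rho) * ((z0d n g c nu rho - 1) / c + g * nu * (nu * z0d n g c nu rho + s * rho * z0s n s g c nu rho / Num.sqrt n%:R))
  + (sv - z0s n s g c nu rho) * (g * (nu * z0d n g c nu rho + s * rho * z0s n s g c nu rho / Num.sqrt n%:R) * s * rho / Num.sqrt n%:R
   + g * s^+2 * (1 - rho^+2) * z0s n s g c nu rho)).
  field; by rewrite !lt0r_neq0.
by rewrite F2 F3 !mulr0 addr0.
Qed.

Lemma single_le (R : realType) (n : nat) (F : 'I_n -> R) (j : 'I_n) :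
  (forall k, 0 <= F k) -> F j <= \sum_(k < n) F k.
Proof.
move=> hF; rewrite (bigD1 j) //= lerDl; apply: sumr_ge0 => k _; exact: hF.
Qed.

Lemma kap_pos (R : realType) (s g rho : R) : 0 < s -> 0 < g -> -1 < rho < 1 -> 0 < g * s^+2 * (1 - rho^+2) / 2.
Proof.
move=> s0 g0 /andP[r1 r2]; apply: divr_gt0 => //; apply: mulr_gt0; first by rewrite mulr_gt0 // exprn_gt0.
nra.
Qed.

Lemma Qrow_bounds (R : realType) (n : nat) (s g c nu rho : R) (h : 'I_n -> R) (t : R) (i : 'I_n) :
  0 < s -> 0 < g -> 0 < c -> -1 < rho < 1 ->
  [/\ 0 <= Qrow s g c nu rho h t i,
      g * s^+2 * (1 - rho^+2) / 2 * t^+2 <= Qrow s g c nu rho h t i &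
      forall j, g / 2 * (nu * h j + s * rho * t / Num.sqrt n%:R) ^+ 2 <= Qrow s g c nu rho h t i].
Proof.
move=> s0 g0 c0 rr.
have k0 := kap_pos s0 g0 rr.
have a0 : 0 <= (h i)^+2 / (2 * c) by apply: divr_ge0; [exact: sqr_ge0 | rewrite mulr_ge0 // ltW].
have g2 : 0 < g / 2 by apply: divr_gt0.
have S0 : 0 <= \sum_(j < n) (nu * h j + s * rho * t / Num.sqrt n%:R) ^+ 2.
  by apply: sumr_ge0 => j _; exact: sqr_ge0.
have t0 : 0 <= g * s^+2 * (1 - rho^+2) / 2 * t^+2 by apply: mulr_ge0; [exact: ltW | exact: sqr_ge0].
have B0 : 0 <= g / 2 * \sum_(j < n) (nu * h j + s * rho * t / Num.sqrt n%:R) ^+ 2 by apply: mulr_ge0 => //; exact: ltW.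
rewrite /Qrow; split.
- lra.
- lra.
- move=> j.
  have := @single_le _ _ (fun j => (nu * h j + s * rho * t / Num.sqrt n%:R) ^+ 2) j (fun k => sqr_ge0 _).
  move=> hj.
  have : g / 2 * (nu * h j + s * rho * t / Num.sqrt n%:R) ^+ 2 <= g / 2 * \sum_(j < n) (nu * h j + s * rho * t / Num.sqrt n%:R) ^+ 2.
    by rewrite ler_pM2l.
  lra.
Qed.

Lemma bound_abs (R : realType) (Q v t hj nu g kap k : R) : 0 < nu -> 0 < g -> 0 < kap ->
  g / 2 * v^+2 <= Q -> kap * t^+2 <= Q -> nu * hj + k * t = v ->
  hj^+2 <= ((4 / g + 2 * k^+2 / kap) / nu^+2) * Q.
Proof.
move=> nu0 g0 k0 hv ht he.
have v2 : 2 * v^+2 <= 4 / g * Q.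
  have e : 4 / g * (g / 2 * v^+2) = 2 * v^+2 by field; rewrite lt0r_neq0.
  rewrite -e; apply: ler_wpM2l => //; apply: divr_ge0 => //; exact: ltW.
have t2 : 2 * k^+2 * t^+2 <= 2 * k^+2 / kap * Q.
  have e : 2 * k^+2 / kap * (kap * t^+2) = 2 * k^+2 * t^+2 by field; rewrite lt0r_neq0.
  rewrite -e; apply: ler_wpM2l => //; apply: divr_ge0; [apply: mulr_ge0 => //; exact: sqr_ge0 | exact: ltW].
have hs : (nu * hj)^+2 <= 2 * v^+2 + 2 * k^+2 * t^+2.
  have -> : nu * hj = v - k * t by rewrite -he; ring.
  have := sqr_ge0 (v + k * t); nra.
have nu2 : 0 < nu^+2 by exact: exprn_gt0.
rewrite mulrAC ler_pdivlMr // mulrC -exprMn; lra.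
Qed.

Definition zst (R : realType) (n : nat) (s g c nu rho : R) : 'M[R]_n * 'cV[R]_n :=
  (\matrix_(i, j) (if i == j then z0d n g c nu rho else z0o n g c nu rho),
   \matrix_(i, j) z0s n s g c nu rho).

Definition Qs (R : realType) (n : nat) (s g c nu rho : R) (y : 'M[R]_n * 'cV[R]_n) : R :=
  \sum_(i < n) Qrow s g c nu rho (fun j => y.1 i j - (zst n s g c nu rho).1 i j)
     (y.2 i 0 - (zst n s g c nu rho).2 i 0) i.

Lemma fhom_diff (R : realType) (n : nat) (s gP g c nu rho : R) (y : 'M[R]_n * 'cV[R]_n) :
  (1 <= n)%N -> 0 < s -> 0 < g -> 0 < c -> 0 < nu -> -1 < rho < 1 ->
  fhom s gP c g nu rho (zst n s g c nu rho) - fhom s gP c g nu rho y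
   = (n%:R)^-1 * Qs s g c nu rho y + gP * (Pen s c g nu rho y - Pen s c g nu rho (zst n s g c nu rho)).
Proof.
move=> n1 s0 g0 c0 nu0 rr.
rewrite !fhom_eq.
have -> : \sum_(i < n) Trow s g c nu rho (fun j => y.1 i j) (y.2 i 0) i =
  \sum_(i < n) Trow s g c nu rho (fun j => (zst n s g c nu rho).1 i j) ((zst n s g c nu rho).2 i 0) i
  + Qs s g c nu rho y.
  rewrite /Qs -big_split; apply: eq_bigr => i _ /=.
  apply: row_id => //; first by move=> j; rewrite mxE.
  by rewrite mxE.
ring.
Qed.

Lemma Qi_le (R : realType) (n : nat) (s g c nu rho : R) (y : 'M[R]_n * 'cV[R]_n) (i : 'I_n) :
  0 < s -> 0 < g -> 0 < c -> -1 < rho < 1 ->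
  Qrow s g c nu rho (fun j => y.1 i j - (zst n s g c nu rho).1 i j) (y.2 i 0 - (zst n s g c nu rho).2 i 0) i
  <= Qs s g c nu rho y.
Proof.
move=> s0 g0 c0 rr; rewrite /Qs.
apply: (@single_le _ _ (fun i => Qrow s g c nu rho (fun j => y.1 i j - (zst n s g c nu rho).1 i j)
     (y.2 i 0 - (zst n s g c nu rho).2 i 0) i)).
by move=> k; have [] := @Qrow_bounds R n s g c nu rho (fun j => y.1 k j - (zst n s g c nu rho).1 k j)
     (y.2 k 0 - (zst n s g c nu rho).2 k 0) k s0 g0 c0 rr.
Qed.

Lemma Qs_ge0 (R : realType) (n : nat) (s g c nu rho : R) (y : 'M[R]_n * 'cV[R]_n) :
  0 < s -> 0 < g -> 0 < c -> -1 < rho < 1 -> 0 <= Qs s g c nu rho y.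
Proof.
move=> s0 g0 c0 rr; rewrite /Qs; apply: sumr_ge0 => k _.
by have [] := @Qrow_bounds R n s g c nu rho (fun j => y.1 k j - (zst n s g c nu rho).1 k j)
     (y.2 k 0 - (zst n s g c nu rho).2 k 0) k s0 g0 c0 rr.
Qed.

Definition Mc (R : realType) (n : nat) (s g nu rho : R) : R :=
  (4 / g + 2 * (s * rho / Num.sqrt n%:R)^+2 / (g * s^+2 * (1 - rho^+2) / 2)) / nu^+2.

Lemma entry_bounds (R : realType) (n : nat) (s g c nu rho : R) (y : 'M[R]_n * 'cV[R]_n) (i : 'I_n) :
  0 < s -> 0 < g -> 0 < c -> 0 < nu -> -1 < rho < 1 ->
  (y.2 i 0 - (zst n s g c nu rho).2 i 0)^+2 <= (g * s^+2 * (1 - rho^+2) / 2)^-1 * Qs s g c nu rho y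
  /\ forall j, (y.1 i j - (zst n s g c nu rho).1 i j)^+2 <= Mc n s g nu rho * Qs s g c nu rho y.
Proof.
move=> s0 g0 c0 nu0 rr.
have k0 := kap_pos s0 g0 rr.
have hQ := @Qi_le R n s g c nu rho y i s0 g0 c0 rr.
have [_ ht hv] := @Qrow_bounds R n s g c nu rho (fun j => y.1 i j - (zst n s g c nu rho).1 i j)
     (y.2 i 0 - (zst n s g c nu rho).2 i 0) i s0 g0 c0 rr.
split.
  rewrite ler_pdivlMl //; lra.
move=> j.
set hj := y.1 i j - (zst n s g c nu rho).1 i j.
set tt := y.2 i 0 - (zst n s g c nu rho).2 i 0.
have e : nu * hj + (s * rho / Num.sqrt n%:R) * tt = nu * hj + s * rho * tt / Num.sqrt n%:R by rewrite mulrAC.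
have h1 : g / 2 * (nu * hj + s * rho * tt / Num.sqrt n%:R) ^+ 2 <= Qs s g c nu rho y.
  exact: le_trans (hv j) hQ.
have h2 : g * s ^+ 2 * (1 - rho ^+ 2) / 2 * tt ^+ 2 <= Qs s g c nu rho y by exact: le_trans ht hQ.
have := @bound_abs R (Qs s g c nu rho y) _ tt hj nu g _ (s * rho / Num.sqrt n%:R) nu0 g0 k0 h1 h2 e.
by rewrite /Mc.
Qed.

Lemma part1 (R : realType) (n : nat) (sigma gam c nu rho : R) :
     (1 <= n)%N -> 0 < sigma -> 0 < gam -> 0 < c -> 0 < nu -> -1 < rho < 1 ->
     (0 <= eta_n n gam c nu rho < n%:R)
     /\ (exists z : 'M[R]_n * 'cV[R]_n,
          [/\ is_maximiser (fhom sigma 0 c gam nu rho) z,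
              (forall y, is_maximiser (fhom sigma 0 c gam nu rho) y -> y = z),
              [/\ (forall i : 'I_n, z.2 i 0 = z0s n sigma gam c nu rho),
                  (forall i : 'I_n, z.1 i i = z0d n gam c nu rho) &
                  (forall i j : 'I_n, i != j -> z.1 i j = z0o n gam c nu rho)] &
              (forall g : R -> 'M[R]_n * 'cV[R]_n,
                 (forall gP, 0 < gP -> is_maximiser (fhom sigma gP c gam nu rho) (g gP)) ->
                 [/\ (forall i : 'I_n, (g gP).2 i 0 @[gP --> 0^'+] --> z.2 i 0),
                     (forall i : 'I_n, (g gP).1 i i @[gP --> 0^'+] --> z.1 i i) &
                     (forall i j : 'I_n, i != j ->
                        (g gP).1 i j @[gP --> 0^'+] --> z.1 i j)])]).
Proof.
move=> n1 s0 g0 c0 nu0 rr.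
split; first exact: eta_bounds.
have m0 : 0 < n%:R :> R by rewrite ltr0n.
have k0 := kap_pos s0 g0 rr.
set z := zst n sigma gam c nu rho.
have key : forall gP (y : 'M[R]_n * 'cV[R]_n), 0 <= gP ->
    fhom sigma gP c gam nu rho z <= fhom sigma gP c gam nu rho y ->
    Qs sigma gam c nu rho y <= n%:R * Pen sigma c gam nu rho z * gP.
  move=> gP y gP0 hle.
  have hd := @fhom_diff R n sigma gP gam c nu rho y n1 s0 g0 c0 nu0 rr.
  have P0 := @Pen_ge0 R n sigma c gam nu rho y rr.
  have : (n%:R)^-1 * Qs sigma gam c nu rho y <= gP * Pen sigma c gam nu rho z.
    have : 0 <= gP * Pen sigma c gam nu rho y by apply: mulr_ge0.
    rewrite mulrBr in hd; lra.
  move=> h.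
  have -> : Qs sigma gam c nu rho y = n%:R * ((n%:R)^-1 * Qs sigma gam c nu rho y).
    by rewrite mulrA divff ?mul1r // lt0r_neq0.
  by rewrite -mulrA ler_pM2l // [X in _ <= X]mulrC.
have bnd : forall (y : 'M[R]_n * 'cV[R]_n) gP, 0 <= gP ->
    fhom sigma gP c gam nu rho z <= fhom sigma gP c gam nu rho y ->
    forall i, (y.2 i 0 - z.2 i 0)^+2 <= ((gam * sigma^+2 * (1 - rho^+2) / 2)^-1 * (n%:R * Pen sigma c gam nu rho z)) * gP
      /\ forall j, (y.1 i j - z.1 i j)^+2 <= (Mc n sigma gam nu rho * (n%:R * Pen sigma c gam nu rho z)) * gP.
  move=> y gP gP0 hle i.
  have hQ := key gP y gP0 hle.
  have [h1 h2] := @entry_bounds R n sigma gam c nu rho y i s0 g0 c0 nu0 rr.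
  have kk : 0 <= (gam * sigma^+2 * (1 - rho^+2) / 2)^-1 by rewrite invr_ge0 ltW.
  have Mc0 : 0 <= Mc n sigma gam nu rho.
    rewrite /Mc; apply: divr_ge0; last exact: sqr_ge0.
    apply: addr_ge0; first by apply: divr_ge0 => //; exact: ltW.
    apply: divr_ge0; last exact: ltW.
    apply: mulr_ge0 => //; exact: sqr_ge0.
  split.
    apply: (le_trans h1); have := ler_wpM2l kk hQ; lra.
  move=> j; apply: (le_trans (h2 j)); have := ler_wpM2l Mc0 hQ; lra.
exists z; split.
- move=> y.
  have hd := @fhom_diff R n sigma 0 gam c nu rho y n1 s0 g0 c0 nu0 rr.
  have := @Qs_ge0 R n sigma gam c nu rho y s0 g0 c0 rr.
  have : 0 <= (n%:R)^-1 * Qs sigma gam c nu rho y.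
    apply: mulr_ge0; first by rewrite invr_ge0 ltW.
    exact: Qs_ge0.
  rewrite mul0r addr0 in hd; lra.
- move=> y hy.
  have hle := hy z.
  have hb := bnd y 0 (lexx _) hle.
  have Ex : forall x : R, x^+2 <= 0 -> x = 0.
    by move=> x hx; apply/eqP; rewrite -sqrf_eq0 eq_le hx sqr_ge0.
  case: y hy hle hb => y1 y2 hy hle hb /=.
  congr pair; apply/matrixP => i j.
    have [_ h2] := hb i; have := h2 j; rewrite mulr0 => /Ex /eqP; rewrite subr_eq0 => /eqP //.
  have [h1 _] := hb i; move: h1; rewrite mulr0 => /Ex /eqP; rewrite subr_eq0 (ord1 j) => /eqP //.
- split.
  + by move=> i; rewrite /z /zst /= mxE.
  + by move=> i; rewrite /z /zst /= mxE eqxx.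
  + by move=> i j ij; rewrite /z /zst /= mxE (negbTE ij).
- move=> g hg; split.
  + move=> i; apply: (@cvg_sq R (fun gP => (g gP).2 i 0) (z.2 i 0) _) => x x0.
    have [h1 _] := bnd (g x) x (ltW x0) (hg x x0 z) i; exact: h1.
  + move=> i; apply: (@cvg_sq R (fun gP => (g gP).1 i i) (z.1 i i) _) => x x0.
    have [_ h2] := bnd (g x) x (ltW x0) (hg x x0 z) i; exact: h2.
  + move=> i j _; apply: (@cvg_sq R (fun gP => (g gP).1 i j) (z.1 i j) _) => x x0.
    have [_ h2] := bnd (g x) x (ltW x0) (hg x x0 z) i; exact: h2.
Qed.

Unset Implicit Arguments.

Theorem mainTheorem4 (R : realType) :
  (* Part 1: unique maximiser of f^0, symmetric, explicit values, limits as gammaP -> 0+ *)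
  (forall (n : nat) (sigma gam c nu rho : R),
     (1 <= n)%N -> 0 < sigma -> 0 < gam -> 0 < c -> 0 < nu -> -1 < rho < 1 ->
     (0 <= eta_n n gam c nu rho < n%:R)
     /\ (exists z : 'M[R]_n * 'cV[R]_n,
          [/\ is_maximiser (fhom sigma 0 c gam nu rho) z,
              (forall y, is_maximiser (fhom sigma 0 c gam nu rho) y -> y = z),
              [/\ (forall i : 'I_n, z.2 i 0 = z0s n sigma gam c nu rho),
                  (forall i : 'I_n, z.1 i i = z0d n gam c nu rho) &
                  (forall i j : 'I_n, i != j -> z.1 i j = z0o n gam c nu rho)] &
              (forall g : R -> 'M[R]_n * 'cV[R]_n,
                 (forall gP, 0 < gP -> is_maximiser (fhom sigma gP c gam nu rho) (g gP)) ->
                 [/\ (forall i : 'I_n, (g gP).2 i 0 @[gP --> 0^'+] --> z.2 i 0),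
                     (forall i : 'I_n, (g gP).1 i i @[gP --> 0^'+] --> z.1 i i) &
                     (forall i j : 'I_n, i != j ->
                        (g gP).1 i j @[gP --> 0^'+] --> z.1 i j)])]))
  (* Part 2: |z0s| increasing in |rho| *)
  /\ (forall (n : nat) (sigma gam c nu rho1 rho2 : R),
     (1 <= n)%N -> 0 < sigma -> 0 < gam -> 0 < c -> 0 < nu ->
     -1 < rho1 < 1 -> -1 < rho2 < 1 -> `|rho1| < `|rho2| ->
     `|z0s n sigma gam c nu rho1| < `|z0s n sigma gam c nu rho2|)
  (* Part 3: |z0s| decreasing in c (strictly when rho <> 0; identically 0 when rho = 0) *)
  /\ (forall (n : nat) (sigma gam c1 c2 nu rho : R),
     (1 <= n)%N -> 0 < sigma -> 0 < gam -> 0 < c1 -> c1 < c2 -> 0 < nu -> -1 < rho < 1 ->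
     `|z0s n sigma gam c2 nu rho| <= `|z0s n sigma gam c1 nu rho|
     /\ (rho != 0 -> `|z0s n sigma gam c2 nu rho| < `|z0s n sigma gam c1 nu rho|))
  (* Part 4: |z0s| increasing in nu on (0, nudag] *)
  /\ (forall (n : nat) (sigma gam c nu1 nu2 rho : R),
     (1 <= n)%N -> 0 < sigma -> 0 < gam -> 0 < c -> -1 < rho < 1 ->
     0 < nu1 -> nu1 < nu2 -> nu2 <= nudag n gam c rho ->
     `|z0s n sigma gam c nu1 rho| <= `|z0s n sigma gam c nu2 rho|
     /\ (rho != 0 -> `|z0s n sigma gam c nu1 rho| < `|z0s n sigma gam c nu2 rho|))
  (* Part 5: |z0s| decreasing in nu on [nudag, oo) *)
  /\ (forall (n : nat) (sigma gam c nu1 nu2 rho : R),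
     (1 <= n)%N -> 0 < sigma -> 0 < gam -> 0 < c -> -1 < rho < 1 ->
     nudag n gam c rho <= nu1 -> nu1 < nu2 ->
     `|z0s n sigma gam c nu2 rho| <= `|z0s n sigma gam c nu1 rho|
     /\ (rho != 0 -> `|z0s n sigma gam c nu2 rho| < `|z0s n sigma gam c nu1 rho|))
  (* Part 6: z0o (n >= 2) increasing in |rho| *)
  /\ (forall (n : nat) (gam c nu rho1 rho2 : R),
     (2 <= n)%N -> 0 < gam -> 0 < c -> 0 < nu ->
     -1 < rho1 < 1 -> -1 < rho2 < 1 -> `|rho1| < `|rho2| ->
     z0o n gam c nu rho1 < z0o n gam c nu rho2)
  (* Part 7: z0o (n >= 2) decreasing in c *)
  /\ (forall (n : nat) (gam c1 c2 nu rho : R),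
     (2 <= n)%N -> 0 < gam -> 0 < c1 -> c1 < c2 -> 0 < nu -> -1 < rho < 1 ->
     z0o n gam c2 nu rho <= z0o n gam c1 nu rho
     /\ (rho != 0 -> z0o n gam c2 nu rho < z0o n gam c1 nu rho))
  (* Part 8: z0o (n >= 2) decreasing in nu *)
  /\ (forall (n : nat) (gam c nu1 nu2 rho : R),
     (2 <= n)%N -> 0 < gam -> 0 < c -> 0 < nu1 -> nu1 < nu2 -> -1 < rho < 1 ->
     z0o n gam c nu2 rho <= z0o n gam c nu1 rho
     /\ (rho != 0 -> z0o n gam c nu2 rho < z0o n gam c nu1 rho))
  (* Part 9: z0d increasing in |rho| *)
  /\ (forall (n : nat) (gam c nu rho1 rho2 : R),
     (1 <= n)%N -> 0 < gam -> 0 < c -> 0 < nu ->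
     -1 < rho1 < 1 -> -1 < rho2 < 1 -> `|rho1| < `|rho2| ->
     z0d n gam c nu rho1 < z0d n gam c nu rho2)
  (* Part 10: z0d decreasing in c *)
  /\ (forall (n : nat) (gam c1 c2 nu rho : R),
     (1 <= n)%N -> 0 < gam -> 0 < c1 -> c1 < c2 -> 0 < nu -> -1 < rho < 1 ->
     z0d n gam c2 nu rho < z0d n gam c1 nu rho)
  (* Part 11: z0d decreasing in nu *)
  /\ (forall (n : nat) (gam c nu1 nu2 rho : R),
     (1 <= n)%N -> 0 < gam -> 0 < c -> 0 < nu1 -> nu1 < nu2 -> -1 < rho < 1 ->
     z0d n gam c nu2 rho < z0d n gam c nu1 rho).
Proof.
split; first exact: part1.
split; first exact: part2.
split; first exact: part3.
split.
  move=> n sigma gam c nu1 nu2 rho n1 s0 g0 c0 rr nu10 nu12 hd.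
  have [h _] := part45 n1 s0 g0 c0 rr nu10 nu12 ; exact: h hd.
split.
  move=> n sigma gam c nu1 nu2 rho n1 s0 g0 c0 rr hd nu12.
  have nu10 : 0 < nu1.
    apply: lt_le_trans hd. rewrite /nudag sqrtr_gt0.
    have /andP[r1 r2] := rr.
    have m1 : 1 <= n%:R :> R by rewrite ler1n.
    have b0 : 0 < n%:R * (1 - rho^+2) by apply: mulr_gt0; nra.
    apply: divr_gt0; first exact: a_pos.
    by rewrite -mulrA mulr_gt0 // mulr_gt0.
  have [_ h] := part45 n1 s0 g0 c0 rr nu10 nu12 ; exact: h hd.
split; first exact: part6.
split; first exact: part7.
split; first exact: part8.
split; first exact: part9.
split; first exact: part10.
exact: part11.
Qed.
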